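(* Let $(X,\mathbb{Z}^k,T)$ be a continuum-wise expansive $\mathbb{Z}^k$-action with expansivity constant $2c>0$. Then there is $\delta>0$ with the following property. If $A\in C(X)$ and $N\ge1$ satisfy $$c\le\max\{\mathrm{diam}\,T^n(A): n\in[-N,N]^k\}\le 2c,$$ then $$\max\{\mathrm{diam}\,T^n(A): n\in\partial[-N,N]^k\}>\delta.$$
   Context: $X$ is a compact metric space with metric $d$, and $T\colon\mathbb{Z}^k\times X\to X$ is a continuous action. $C(X)$ is the set of nonempty connected closed subsets of $X$. A set is nondegenerate if it has at least two points. A constant $c'>0$ is an expansivity constant, and the action is continuum-wise expansive, if for every nondegenerate $A\in C(X)$ there is $n\in\mathbb{Z}^k$ with $\mathrm{diam}\,T^n(A)>c'$. $[-N,N]^k=\{(n_i)\in\mathbb{Z}^k: -N\le n_i\le N\}$ and $\partial[-N,N]^k=\{(n_i)\in[-N,N]^k: n_j\in\{-N,N\}\text{ for some }j\}$. *)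

(* Defs.v *)
From HB Require Import structures.
From mathcomp Require Import all_boot all_order all_algebra.
From mathcomp Require Import all_classical all_reals all_analysis.
Set Implicit Arguments. Unset Strict Implicit. Unset Printing Implicit Defensive.
Import Order.TTheory GRing.Theory Num.Theory.
Local Open Scope classical_set_scope.
Local Open Scope ring_scope.

Definition zvec (k : nat) := 'I_k -> int.

Definition diam {R : realType} {X : metricType R} (A : set X) : R :=
  sup [set mdist x y | x in A & y in A].

Definition continuous_action {R : realType} {X : metricType R} (k : nat)
    (T : zvec k -> X -> X) : Prop :=
  (forall n, continuous (T n)) /\
  T (fun _ => 0) = id /\
  (forall m n : zvec k, T (fun i => m i + n i) = T m \o T n).

Definition is_continuum {R : realType} {X : metricType R} (A : set X) : Prop :=
  A !=set0 /\ connected A /\ closed A.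

Definition nondegenerate {X : Type} (A : set X) : Prop :=
  exists x y, A x /\ A y /\ x <> y.

Definition cw_expansive {R : realType} {X : metricType R} (k : nat)
    (T : zvec k -> X -> X) (c' : R) : Prop :=
  0 < c' /\
  forall A : set X, is_continuum A -> nondegenerate A ->
    exists n : zvec k, c' < diam (T n @` A).

Definition cube (k N : nat) (n : zvec k) : Prop :=
  forall i, - (N%:Z) <= n i <= N%:Z.

Definition cube_boundary (k N : nat) (n : zvec k) : Prop :=
  cube N n /\ exists j, n j = - (N%:Z) \/ n j = N%:Z.

(* Main.v *)
Require Import Defs.
From HB Require Import structures.
From mathcomp Require Import all_boot all_order all_algebra.
From mathcomp Require Import all_classical all_reals all_analysis.
From mathcomp Require Import ring lra zify.
Import Order.TTheory GRing.Theory Num.Theory.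
Local Open Scope classical_set_scope.
Local Open Scope ring_scope.
Import metricType_numDomainType.

Section Met.
Variables (R : realType) (X : metricType R).

Lemma diam_ub (D : R) (S : set X) x y : (forall x y : X, mdist x y <= D) ->
  S x -> S y -> mdist x y <= diam S.
Proof.
move=> HD Sx Sy; apply: ub_le_sup.
  by exists D => _ [a _ [b _ <-]].
by exists x => //; exists y.
Qed.

Lemma diam_lt (S : set X) r : 0 <= r -> r < diam S ->
  exists x y, S x /\ S y /\ r < mdist x y.
Proof.
move=> r0 H; apply: contrapT => H'; move: H; rewrite /diam; apply/negP; rewrite -leNgt.
have [->|ne] := eqVneq [set mdist x y | x in S & y in S] set0.
  by rewrite sup0.
apply: ge_sup; first exact/set0P.
move=> _ [a Sa [b Sb <-]]; rewrite leNgt; apply/negP => h.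
by apply: H'; exists a, b.
Qed.

Lemma cont_eps (f : X -> X) x e : continuous f -> 0 < e ->
  exists2 d, 0 < d & forall y, mdist x y < d -> mdist (f x) (f y) < e.
Proof.
move=> cf e0.
have H : \forall t \near x, mdist (f x) (f t) < e := cvgr_dist_lt (cf x) e0.
have [d d0 Hd] := (@nbhs_mdistP R X x _).1 (H _).
exists d => // y xy; exact: Hd.
Qed.

Lemma open_nbhd (S : set X) (r : R) : open [set x | exists2 p, S p & mdist p x < r].
Proof.
rewrite openE => x [p Sp px]; rewrite /interior.
apply/(@nbhs_mdistP R X x); exists (r - mdist p x); first by rewrite /= subr_gt0.
move=> y /= xy; exists p => //.
apply: le_lt_trans (metric_triangle _ x _) _; lra.
Qed.

Lemma fin_ineq (c r a b p s : R) : 2 * c < r -> s <= 2 * c -> a < (r - 2 * c) / 2 ->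
  b < (r - 2 * c) / 2 -> r <= a + p -> p <= s + b -> False.
Proof. lra. Qed.
End Met.

Section Ultra.
Variables (R : realType) (X : metricType R).
Hypothesis cX : compact [set: X].
Variable U : set_system nat.
Hypothesis UU : UltraFilter U.
Hypothesis Ue : \oo `<=` U.

Lemma Uex S : U S -> exists m, S m.
Proof. by move=> /filter_ex. Qed.

Lemma Uge S M : U S -> exists m, (M <= m)%N /\ S m.
Proof.
move=> US; have : U [set m | (M <= m)%N] by apply: Ue; exact: nbhs_infty_ge.
move=> /(filterI US) /Uex [m [? ?]]; by exists m.
Qed.

Lemma Udich S : U S \/ U (~` S).
Proof. exact: in_ultra_setVsetC. Qed.

Lemma ultralim (z : nat -> X) : exists p, forall e, 0 < e -> U [set m | mdist p (z m) < e].
Proof.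
have /(_ (z @ U) _ _) := cX.
case => //; first by rewrite /= /fmap /= preimage_setT; exact: filterT.
move=> p [_ clp]; exists p => e e0.
have [//|nS] := Udich [set m | mdist p (z m) < e].
have := clp [set x | ~ mdist p x < e] (ball p e) nS (nbhsx_ballx _ _ e0).
by case=> x [/= nx]; rewrite ballEmdist.
Qed.

Lemma mdist_bounded : exists D, forall x y : X, mdist x y <= D.
Proof.
apply/not_existsP => H.
have H2 : forall j : nat, exists xy : X * X, j%:R < mdist xy.1 xy.2.
  move=> j; have /existsNP [x /existsNP [y]] := H j%:R.
  by move=> /negP; rewrite -ltNge => ?; exists (x, y).
have [xy Hxy] := choice H2.
have [x Hx] := ultralim (fun j => (xy j).1).
have [y Hy] := ultralim (fun j => (xy j).2).
have [m [Mm [/= h1 h2]]] := Uge _ (Num.truncn (mdist x y + 2)).+1 (filterI (Hx _ ltr01) (Hy _ ltr01)).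
have := Hxy m; apply/negP; rewrite -leNgt.
rewrite (le_trans (metric_triangle _ x _))// metric_sym.
rewrite (le_trans (lerD (ltW h1) (metric_triangle _ y _)))//.
have h3 := truncnS_gt (mdist x y + 2).
have h4 : ((Num.truncn (mdist x y + 2)).+1%:R <= m%:R :> R) by rewrite ler_nat.
apply/ltW; apply: (lt_le_trans _ h4); apply: (le_lt_trans _ h3).
lra.
Qed.

Lemma Usmall (e : R) : 0 < e -> U [set m | m.+1%:R^-1 < e].
Proof.
move=> e0; apply: Ue; exists (Num.truncn e^-1).+1 => // m /= hm.
rewrite invf_plt ?posrE ?ltr0Sn//.
apply: (lt_le_trans (truncnS_gt _)); rewrite ler_nat; exact: ltnW.
Qed.

Lemma closed_lim (S : set X) (z : nat -> X) q : closed S ->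
  (forall e, 0 < e -> U [set m | mdist q (z m) < e]) ->
  U [set m | S (z m)] -> S q.
Proof.
move=> cS Hq HS; apply: cS => W /(@nbhs_mdistP R X q W) [e e0 He].
have [m [Sm qm]] := Uex _ (filterI HS (Hq e e0)).
by exists (z m); split => //; apply: He.
Qed.

Variables (k : nat) (T : zvec k -> X -> X) (c : R).
Hypothesis cT : continuous_action T.
Hypothesis c0 : 0 < c.
Variables (A : nat -> set X) (N : nat -> nat) (nn : nat -> zvec k).
Hypothesis hA : forall m, is_continuum (A m).
Hypothesis hnn : forall m, cube (N m) (nn m).
Hypothesis hc : forall m, c <= diam (T (nn m) @` A m).
Hypothesis h2c : forall m n, cube (N m) n -> diam (T n @` A m) <= 2 * c.
Hypothesis hbd : forall m n, cube_boundary (N m) n -> diam (T n @` A m) <= m.+1%:R^-1.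
Variable D : R.
Hypothesis HD : forall x y : X, mdist x y <= D.

Lemma Tcomp (m n : zvec k) x : T m (T n x) = T (fun i => m i + n i) x.
Proof. by case: cT => _ [_ ->]. Qed.

Lemma pts : exists xs ys : nat -> X, forall m, A m (xs m) /\ A m (ys m) /\ (c / 2 < mdist (T (nn m) (xs m)) (T (nn m) (ys m))).
Proof.
have H : forall m, exists xy : X * X, A m xy.1 /\ A m xy.2 /\ (c / 2 < mdist (T (nn m) xy.1) (T (nn m) xy.2)).
  move=> m.
  have h1 : 0 <= c / 2 by rewrite divr_ge0// ltW.
  have h2 : c / 2 < diam (T (nn m) @` A m).
    by apply: (lt_le_trans _ (hc m)); rewrite ltr_pdivrMr// ltr_pMr// ltr1n.
  have [_ [_ [[a Aa <-] [[b Ab <-] h]]]] := @diam_lt R X _ _ h1 h2; by exists (a, b).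
have [f Hf] := choice H; by exists (fun m => (f m).1), (fun m => (f m).2).
Qed.


Lemma bad (v : zvec k) : ~ U [set m | cube_boundary (N m) (fun i => nn m i + v i)].
Proof.
move=> HU.
have [xs [ys Hp]] := pts.
pose p m : zvec k := fun i => nn m i + v i.
pose g := T (fun i => - v i).
have Hg : forall m z, g (T (p m) z) = T (nn m) z.
  move=> m z; rewrite /g Tcomp; congr T; apply/funext => i /=; rewrite /p.
  by rewrite addrCA addNr addr0.
have [q Hq] := ultralim (fun m => T (p m) (xs m)).
have cg : continuous g by case: cT => H _; exact: H.
have c4 : 0 < c / 4 by rewrite divr_gt0.
have [d d0 Hd] := @cont_eps R X g q (c/4) cg c4.
have d2 : 0 < d / 2 by rewrite divr_gt0.
have U1 := Hq (d/2) d2.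
have U2 := Usmall _ d2.
have [m [Bm [qm sm]]] := Uex _ (filterI HU (filterI U1 U2)).
have [Am1 [Am2 hm]] := Hp m.
rewrite /= in Bm qm sm.
have h1 : mdist (T (p m) (xs m)) (T (p m) (ys m)) <= m.+1%:R^-1.
  apply: le_trans (hbd _ _ Bm).
  apply: (@diam_ub R X D) => //.
    by exists (xs m).
  by exists (ys m).
have h2 : mdist q (T (p m) (ys m)) < d.
  apply: le_lt_trans (metric_triangle _ (T (p m) (xs m)) _) _; move: h1 sm qm; set r := m.+1%:R^-1; move=> h1 sm qm; lra.
have h3 : mdist q (T (p m) (xs m)) < d by lra.
have e1 := Hd _ h3.
have e2 := Hd _ h2.
move: hm; rewrite -!Hg => hm.
have := metric_triangle (g (T (p m) (xs m))) (g q) (g (T (p m) (ys m))).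
rewrite (metric_sym (g (T (p m) (xs m))) (g q)); lra.
Qed.


Definition ej (j : 'I_k) (t : int) : zvec k := fun i => if i == j then t else 0.

Lemma Uup (j : 'I_k) (t : nat) : U [set m | nn m j + t%:Z <= (N m)%:Z].
Proof.
elim: t => [|t IH].
  apply: filterS filterT => m _ /=; rewrite addr0.
  by have /andP[_ ?] := hnn m j.
have [//|H] := Udich [set m | nn m j + t.+1%:Z <= (N m)%:Z].
exfalso; apply: (bad (ej j t%:Z)).
apply: filterS (filterI IH H) => m [/= h1 h2]; split.
  move=> i; rewrite /ej; case: eqP => [->|_].
    have /andP[h3 h4] := hnn m j; apply/andP; split; lia.
  by rewrite addr0; exact: hnn.
exists j; right; rewrite /ej eqxx.
move/negP: h2; rewrite -ltNge => h2; lia.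
Qed.

Lemma Udown (j : 'I_k) (t : nat) : U [set m | - (N m)%:Z <= nn m j - t%:Z].
Proof.
elim: t => [|t IH].
  apply: filterS filterT => m _ /=; rewrite subr0.
  by have /andP[? _] := hnn m j.
have [//|H] := Udich [set m | - (N m)%:Z <= nn m j - t.+1%:Z].
exfalso; apply: (bad (ej j (- t%:Z))).
apply: filterS (filterI IH H) => m [/= h1 h2]; split.
  move=> i; rewrite /ej; case: eqP => [->|_].
    have /andP[h3 h4] := hnn m j; apply/andP; split; lia.
  by rewrite addr0; exact: hnn.
exists j; left; rewrite /ej eqxx.
move/negP: h2; rewrite -ltNge => h2; lia.
Qed.

Lemma Ucube (w : zvec k) : U [set m | cube (N m) (fun i => nn m i + w i)].
Proof.
have H : forall s : seq 'I_k, U [set m | forall j, j \in s ->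
    - (N m)%:Z <= nn m j + w j <= (N m)%:Z].
  elim => [|j s IH].
    by apply: filterS filterT => m _ j.
  have Hj : U [set m | - (N m)%:Z <= nn m j + w j <= (N m)%:Z].
    apply: filterS (filterI (Uup j `|w j|%N) (Udown j `|w j|%N)) => m [/= h1 h2].
    have /andP[h3 h4] := hnn m j.
    case: (w j) h1 h2 => n h1 h2 /=; apply/andP; split; lia.
  apply: filterS (filterI Hj IH) => m [h1 h2] i.
  by rewrite in_cons => /orP[/eqP->|/h2].
by apply: filterS (H (enum 'I_k)) => m h i; apply: h; rewrite mem_enum.
Qed.


Let Bm m := T (nn m) @` A m.
Let B := [set x | forall e, 0 < e -> U [set m | exists2 y, Bm m y & mdist x y < e]].

Lemma B_lim (z : nat -> X) q : U [set m | Bm m (z m)] ->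
  (forall e, 0 < e -> U [set m | mdist q (z m) < e]) -> B q.
Proof.
move=> HB Hq e e0; apply: filterS (filterI HB (Hq e e0)) => m [h1 h2].
by exists (z m).
Qed.

Lemma B_closed : closed B.
Proof.
move=> x clx e e0.
have e2 : 0 < e / 2 by rewrite divr_gt0.
have [x' [Bx' xx']] := clx _ (nbhsx_ballx x (e/2) e2).
rewrite ballEmdist /= in xx'.
apply: filterS (Bx' _ e2) => m [y By h]; exists y => //.
apply: le_lt_trans (metric_triangle _ x' _) _; lra.
Qed.

Lemma B_nondeg : exists x y, B x /\ B y /\ x <> y.
Proof.
have [xs [ys Hp]] := pts.
have [q1 H1] := ultralim (fun m => T (nn m) (xs m)).
have [q2 H2] := ultralim (fun m => T (nn m) (ys m)).
exists q1, q2; split; [|split].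
- apply: B_lim H1; apply: filterS filterT => m _ /=.
  by exists (xs m) => //; case: (Hp m).
- apply: B_lim H2; apply: filterS filterT => m _ /=.
  by exists (ys m) => //; case: (Hp m) => _ [].
move=> q12; subst q2.
have c4 : 0 < c / 4 by rewrite divr_gt0.
have [m [/= h1 h2]] := Uex _ (filterI (H1 _ c4) (H2 _ c4)).
have [_ [_ hm]] := Hp m.
have := metric_triangle (T (nn m) (xs m)) q1 (T (nn m) (ys m)).
rewrite (metric_sym _ q1); lra.
Qed.


Lemma B_conn : connected B.
Proof.
move=> P P0 [C1 oC1 PC1] [C2 cC2 PC2].
apply: contrapT => nPB.
have PB : P `<=` B by rewrite PC1 => x [].
have [b [Bb nPb]] : exists b, B b /\ ~ P b.
  apply: contrapT => H; apply: nPB; apply/seteqP; split => // x Bx.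
  by apply: contrapT => nPx; apply: H; exists x.
pose Q := B `\` P.
have cB := B_closed.
have cP : closed P by rewrite PC2; exact: closedI.
have QE : Q = B `&` ~` C1.
  rewrite /Q PC1; apply/seteqP; split => x /= [Bx h]; split => //.
    by move=> C1x; apply: h.
  by move=> [_ C1x]; exact: h C1x.
have cQ : closed Q by rewrite QE; exact: closedI cB (open_closedC oC1).
have [eta eta0 Heta] : exists2 eta, 0 < eta &
    forall p q, P p -> Q q -> eta <= mdist p q.
  apply: contrapT => H.
  have H2 : forall j : nat, exists pq : X * X,
      P pq.1 /\ Q pq.2 /\ mdist pq.1 pq.2 < j.+1%:R^-1.
    move=> j; apply: contrapT => Hj; apply: H; exists j.+1%:R^-1 => //.
    move=> p q Pp Qq; rewrite leNgt; apply/negP => h; apply: Hj.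
    by exists (p, q).
  have [pq Hpq] := choice H2.
  have [r Hr] := ultralim (fun j => (pq j).1).
  have Pr : P r.
    apply: (@closed_lim P _ r cP Hr); apply: filterS filterT => j _ /=.
    by case: (Hpq j).
  have Qr : Q r.
    apply: (@closed_lim Q (fun j => (pq j).2) r cQ); last first.
      by apply: filterS filterT => j _ /=; case: (Hpq j) => _ [].
    move=> e e0; have e2 : 0 < e / 2 by rewrite divr_gt0.
    apply: filterS (filterI (Hr _ e2) (Usmall _ e2)) => j [/= h1 h2].
    have [_ [_ h3]] := Hpq j.
    apply: le_lt_trans (metric_triangle _ (pq j).1 _) _.
    move: h2 h3; set s := j.+1%:R^-1 => h2 h3; lra.
  by case: Qr => _; apply.
have [p0 Pp0] := P0.
have Qb : Q b by [].
pose Uo := [set x | exists2 p, P p & mdist p x < eta / 2].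
pose Vo := [set x | exists2 p, Q p & mdist p x < eta / 2].
have oU : open Uo := @open_nbhd R X P (eta / 2).
have oV : open Vo := @open_nbhd R X Q (eta / 2).
have dUV : forall x, Uo x -> Vo x -> False.
  move=> x [p Pp px] [q Qq qx]; have := Heta _ _ Pp Qq.
  have := metric_triangle p x q; rewrite (metric_sym x q); lra.
have e2 : 0 < eta / 2 by rewrite divr_gt0.
have claim : U [set m | exists w, Bm m w /\ ~ Uo w /\ ~ Vo w].
  apply: filterS (filterI (PB _ Pp0 _ e2) (Bb _ e2)) => m [[y1 By1 h1] [y2 By2 h2]].
  apply: contrapT => Hn.
  have cov : forall w, Bm m w -> Uo w \/ Vo w.
    move=> w Bw; apply: contrapT => nUV; apply: Hn; exists w; split => //.
    by split => h; apply: nUV; [left|right].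
  have cBm : connected (Bm m).
    apply: connected_continuous_connected; first by case: (hA m) => _ [].
    by apply: continuous_subspaceT; case: cT => H _; exact: H.
  have E : Bm m `&` Uo = Bm m.
    apply: cBm.
    - by exists y1; split => //; exists p0.
    - by exists Uo.
    exists (~` Vo); first exact: open_closedC.
    apply/seteqP; split => w [Bw h]; split => //.
      by move=> Vw; exact: dUV h Vw.
    by case: (cov w Bw).
  have [] : (Bm m `&` Uo) y2 by rewrite E.
  by move=> _ Uy2; apply: dUV Uy2 _; exists b.
have H2 : forall m, exists w, (exists w', Bm m w' /\ ~ Uo w' /\ ~ Vo w') ->
    (Bm m w /\ ~ Uo w /\ ~ Vo w).
  move=> m; case: (pselect (exists w', Bm m w' /\ ~ Uo w' /\ ~ Vo w')).
    by move=> [w hw]; exists w.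
  by move=> nw; exists p0.
have [wf Hw] := choice H2.
have claim2 : U [set m | Bm m (wf m) /\ ~ Uo (wf m) /\ ~ Vo (wf m)].
  by apply: filterS claim => m /Hw.
have [r Hr] := ultralim wf.
have Br : B r by apply: (@B_lim wf r _ Hr); apply: filterS claim2 => m [].
have [m [[_ [nU nV]] h]] := Uex _ (filterI claim2 (Hr _ e2)).
case: (pselect (P r)) => Pr.
  by apply: nU; exists r.
by apply: nV; exists r.
Qed.


Hypothesis cw : cw_expansive T (2 * c).

Lemma contra : False.
Proof.
have [x0 [y0 [Bx0 [By0 nxy]]]] := B_nondeg.
case: cw => _ /(_ B) [].
  by split; [exists x0 | split; [exact: B_conn | exact: B_closed]].
  by exists x0, y0.
move=> n Hn.
have c2 : 0 <= 2 * c by rewrite mulr_ge0// ltW.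
have [_ [_ [[x Bx <-] [[y By <-] h]]]] := @diam_lt R X _ _ c2 Hn.
have eta2 : 0 < (mdist (T n x) (T n y) - 2 * c) / 2 by rewrite divr_gt0// subr_gt0.
have cTn : continuous (T n) by case: cT => H _; exact: H.
have [d1 d10 H1] := @cont_eps R X (T n) x _ cTn eta2.
have [d2 d20 H2] := @cont_eps R X (T n) y _ cTn eta2.
have [m [[x' Bx' hx] [[y' By' hy] Cm]]] :=
  Uex _ (filterI (Bx _ d10) (filterI (By _ d20) (Ucube n))).
rewrite /= in Cm.
case: Bx' => a Aa ea; case: By' => b Ab eb.
have hb : mdist (T n x') (T n y') <= 2 * c.
  rewrite -ea -eb !Tcomp.
  have C2 : cube (N m) (fun i => n i + nn m i).
    by move=> i; rewrite addrC; exact: Cm.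
  apply: le_trans (h2c _ _ C2); apply: (@diam_ub R X D) => //.
have e1 := H1 _ hx.
have e2 := H2 _ hy.
have t1 := metric_triangle (T n x) (T n x') (T n y).
have t2 := metric_triangle (T n x') (T n y') (T n y).
rewrite (metric_sym (T n y')) in t2.
exact: (@fin_ineq R _ _ _ _ _ _ h hb e1 e2 t1 t2).
Qed.

End Ultra.


Theorem lemma4p3 (R : realType) (X : metricType R) (k : nat)
    (T : zvec k -> X -> X) (c : R) :
  compact [set: X] ->
  continuous_action T ->
  0 < c ->
  cw_expansive T (2 * c) ->
  exists delta : R, 0 < delta /\
    forall (A : set X) (N : nat),
      is_continuum A -> (1 <= N)%N ->
      (exists n, cube N n /\ c <= diam (T n @` A)) ->
      (forall n, cube N n -> diam (T n @` A) <= 2 * c) ->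
      exists n, cube_boundary N n /\ delta < diam (T n @` A).
Proof.
move=> cX cT c0 cw.
apply: contrapT => Hno.
have H : forall m : nat, exists A : set X, exists N : nat, exists n : zvec k,
    [/\ is_continuum A, cube N n, c <= diam (T n @` A),
     (forall n, cube N n -> diam (T n @` A) <= 2 * c) &
     (forall n, cube_boundary N n -> diam (T n @` A) <= m.+1%:R^-1)].
  move=> m; apply: contrapT => Hm; apply: Hno; exists m.+1%:R^-1; split => //.
  move=> A N cA N1 [n [cn hn]] h2; apply: contrapT => nb; apply: Hm.
  exists A, N, n; split => // n' cb'; rewrite leNgt; apply/negP => hlt.
  by apply: nb; exists n'.
have [Af HA] := choice H.
have [Nf HN] := choice HA.
have [nf Hn] := choice HN.
have [U [UU Ue]] := @ultraFilterLemma nat \oo _.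
have [D HD] := @mdist_bounded R X cX U UU Ue.
apply: (@contra R X cX U UU Ue k T c cT c0 Af Nf nf _ _ _ _ _ D HD cw) => m.
- by case: (Hn m).
- by case: (Hn m).
- by case: (Hn m).
- by case: (Hn m).
- by case: (Hn m).
Qed.
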